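(* Let $A$ be a finite nonempty set. The monoid $T=\{\mathrm{id}_A\}\cup C$ is u-closed.
   Context: $C$ is the set of all constant unary maps on $A$. A translation of an $n$-ary operation $f$ on $A$ is $x\mapsto f(a_1,\dots,a_{i-1},x,a_{i+1},\dots,a_n)$ with fixed $a_j\in A$; $\mathrm{trl}(f)$ is the set of translations ($\{f\}$ for unary $f$); $N^*:=\{f\mid\mathrm{trl}(f)\subseteq N\}$ for $N\subseteq A^A$. The u-closure $\overline M$ of $M\subseteq A^A$ is the intersection of all monoids $N$ with $M\subseteq N\le A^A$ such that $N^*$ is a clone; $M$ is u-closed if $\overline M=M$. *)

(* Defs.v *)
From mathcomp Require Import all_boot.
Set Implicit Arguments. Unset Strict Implicit. Unset Printing Implicit Defensive.

Definition umapset (A : Type) := (A -> A) -> Prop.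

(* operations of arity n.+1 (clones consist of operations of positive arity) *)
Definition op (A : Type) (n : nat) := ('I_n.+1 -> A) -> A.

Definition opset (A : Type) := forall n : nat, op A n -> Prop.

Definition constmaps (A : Type) : umapset A :=
  fun f => exists c : A, f = (fun _ => c).

Definition translation (A : Type) (n : nat) (f : op A n) (i : 'I_n.+1)
  (a : 'I_n.+1 -> A) : A -> A :=
  fun x => f (fun j => if j == i then x else a j).

(* trl(f) subset N  (for unary f this is just f in N, up to the identification
   of unary operations with maps A -> A) *)
Definition trl_sub (A : Type) (n : nat) (f : op A n) (N : umapset A) : Prop :=
  forall (i : 'I_n.+1) (a : 'I_n.+1 -> A), N (translation f i a).

Definition star (A : Type) (N : umapset A) : opset A :=
  fun n f => trl_sub f N.

Definition is_monoid (A : Type) (N : umapset A) : Prop :=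
  N (fun x => x) /\ (forall f g, N f -> N g -> N (fun x => f (g x))).

Definition proj (A : Type) (n : nat) (i : 'I_n.+1) : op A n := fun x => x i.

Definition compose_op (A : Type) (m k : nat) (f : op A m)
  (g : 'I_m.+1 -> op A k) : op A k :=
  fun x => f (fun i => g i x).

Definition is_clone (A : Type) (F : opset A) : Prop :=
  (forall (n : nat) (i : 'I_n.+1), F n (@proj A n i)) /\
  (forall (m k : nat) (f : op A m) (g : 'I_m.+1 -> op A k),
      F m f -> (forall i, F k (g i)) -> F k (compose_op f g)).

Definition u_closure (A : Type) (M : umapset A) : umapset A :=
  fun h => forall N : umapset A,
    (forall f, M f -> N f) -> is_monoid N -> is_clone (star N) -> N h.

Definition u_closed (A : Type) (M : umapset A) : Prop :=
  forall h, u_closure M h <-> M h.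

(* Main.v *)
From Stdlib Require Import FunctionalExtensionality.
Require Import Defs.
From mathcomp Require Import all_boot.

Section S.
Variable A : finType.
Definition TT : umapset A := fun f : A -> A => f = (fun x => x) \/ constmaps f.

Lemma key n (f : op A n) (a : A) (u w : 'I_n.+1 -> A) :
  star TT f -> f u != a -> (forall i, u i != w i -> u i = a) ->
  forall s : seq 'I_n.+1, f (fun j => if j \in s then w j else u j) = f u.
Proof.
move=> Hf Hfu Huw; elim=> [|i s IH] /=.
  by congr f; apply: functional_extensionality.
set v := (fun j => if j \in s then w j else u j) in IH.
have E1 : (fun j => if j \in i :: s then w j else u j)
   = (fun j => if j == i then w i else v j).
  apply: functional_extensionality => j.
  rewrite in_cons; case: eqP => [->|] //.
have E2 : translation f i v (v i) = f v.
  rewrite /translation; congr f; apply: functional_extensionality => j.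
  by case: eqP => [->|].
rewrite E1 -/(translation f i v (w i)); case: (Hf i v) => [Hid|[c Hc]].
- case: (eqVneq (v i) (w i)) => [<-|Hne]; first by rewrite E2 IH.
  have Hvi : v i = a.
    move: Hne; rewrite /v; case: (i \in s) => [/eqP //|Hne]; exact: Huw.
  by move: E2; rewrite Hid Hvi IH => Ea; rewrite Ea eqxx in Hfu.
- by rewrite Hc -IH -E2 Hc.
Qed.

Lemma TT_monoid : is_monoid TT.
Proof.
split; first by left.
rewrite /TT /constmaps => f g [Ef|[c Ef]] [Eg|[d Eg]]; subst f g.
- by left.
- by right; exists d.
- by right; exists c.
- by right; exists c.
Qed.

Lemma TT_clone : is_clone (star TT).
Proof.
split.
  move=> n i j b; rewrite /TT /translation /proj /constmaps.
  case: eqP => [_|ne]; first by left.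
  by right; exists (b i).
move=> m k f g Hf Hg i b.
set h := translation (compose_op f g) i b.
have Ht : forall l, TT (fun x => g l (fun j => if j == i then x else b j)).
  by move=> l; exact: (Hg l i b).
case: (pickP (fun a => h a != a)) => [a Ha|H].
  right; exists (h a); apply: functional_extensionality => y.
  have := @key m f a (fun l => g l (fun j => if j == i then a else b j))
    (fun l => g l (fun j => if j == i then y else b j)) Hf Ha.
  move=> K; have := K _ (enum 'I_m.+1).
  have -> : (fun j => if j \in enum 'I_m.+1
      then g j (fun j0 => if j0 == i then y else b j0)
      else g j (fun j0 => if j0 == i then a else b j0))
      = (fun l => g l (fun j => if j == i then y else b j)).
    by apply: functional_extensionality => j; rewrite mem_enum.
  apply.
  move=> l; case: (Ht l) => [E|[c E]].
    by move=> _; have := f_equal (fun F => F a) E.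
  have Ea := f_equal (fun F => F a) E; have Ey := f_equal (fun F => F y) E.
  by simpl in Ea, Ey; rewrite Ea Ey eqxx.
left; apply: functional_extensionality => x; by have := H x => /= /negbFE /eqP.
Qed.
End S.

Theorem proposition5p1 (A : finType) (a0 : A) :
  u_closed (fun f : A -> A => f = (fun x => x) \/ constmaps f).
Proof.
move=> h; split.
  move=> H; exact: (H (TT A) (fun f Hf => Hf) (@TT_monoid A) (@TT_clone A)).
by move=> Hh N HN _ _; apply: HN.
Qed.
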